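(* Let $G$ be a finite simple graph with $n\ge2$ vertices and let $S_n=K_{1,n-1}$. The following are equivalent: (i) $G$ is regular; (ii) $|s(\{I(S_n)\}*\{I(G)\})|=1$; (iii) $|s(\{\rho(S_n)\}*\{I(G)\})|=1$.
   Context: Take $R=\mathbb{Z}$. An $R$-weighted complete graph $K$ is a finite vertex set with a weight $v_K(e)\in R$ on every 2-subset $e$. For such $H,G'$ with equal vertex counts and a bijection $f:V(H)\to V(G')$, $H*_fG'$ has vertex set $V(H)$ and weights $v_H(\{x,y\})v_{G'}(\{f(x),f(y)\})$; $H*G'=\{H*_fG': f \text{ bijection}\}$. $s(K)=\sum_e v_K(e)$, $s(\mathscr K)=\{s(K):K\in\mathscr K\}$. For a simple graph $G$, $I(G)$ has weight $1$ on edges and $0$ on non-edges; for connected $G$, $\rho(G)$ has weight $\rho_G(x,y)$ (graph distance) on $\{x,y\}$. *)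

(* Defs.v *)
From mathcomp Require Import all_boot all_order all_algebra.
Set Implicit Arguments. Unset Strict Implicit. Unset Printing Implicit Defensive.
Import Order.TTheory GRing.Theory Num.Theory.
Local Open Scope ring_scope.

(* A Z-weighted complete graph on vertex set V (a finType) is a weight
   function on subsets of V; only the weights of 2-subsets are relevant. *)
Definition wgraph (V : finType) := {set V} -> int.

Definition wsum (V : finType) (K : wgraph V) : int :=
  \sum_(A : {set V} | #|A| == 2%N) K A.

Definition wprod (V W : finType) (H : wgraph V) (G' : wgraph W) (f : V -> W)
  : wgraph V := fun A => H A * G' (f @: A).

(* s({H} * {G'}) as a predicate on int: the set of s(H *_f G') over
   bijections f : V(H) -> V(G'). *)
Definition sprod_set (V W : finType) (H : wgraph V) (G' : wgraph W) : int -> Prop :=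
  fun z => exists f : V -> W, bijective f /\ wsum (wprod H G' f) = z.

Definition card_one (S : int -> Prop) : Prop :=
  exists c : int, forall z, S z <-> z = c.

Definition Iw (V : finType) (e : rel V) : wgraph V :=
  fun A => (([exists x, exists y, (A == [set x; y]) && e x y]) : bool)%:R.

Fixpoint walk (V : finType) (e : rel V) (k : nat) (x y : V) : bool :=
  match k with
  | 0%N => x == y
  | k'.+1 => [exists z, e x z && walk e k' z y]
  end.

(* graph distance: least k admitting a walk of length k (for a connected
   graph some k < #|V| works) *)
Definition gdist (V : finType) (e : rel V) (x y : V) : nat :=
  find (fun k => walk e k x y) (iota 0 #|V|).

Definition rhow (V : finType) (e : rel V) : wgraph V :=
  fun A => match [pick x in A] with
           | Some x => match [pick y in A :\ x] with
                       | Some y => (gdist e x y)%:R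
                       | None => 0
                       end
           | None => 0
           end.

Definition star_rel (n : nat) : rel 'I_n :=
  fun i j => (i != j) && ((val i == 0%N) || (val j == 0%N)).

Definition regular (V : finType) (e : rel V) : Prop :=
  exists k : nat, forall x : V, #|[set y | e x y]| = k.

(* Main.v *)
Require Import Defs.
From mathcomp Require Import all_boot all_order all_algebra.
From mathcomp Require Import all_fingroup ring zify.
Set Implicit Arguments. Unset Strict Implicit. Unset Printing Implicit Defensive.
Import Order.TTheory GRing.Theory Num.Theory.
Local Open Scope ring_scope.

Lemma iw_set2 (V : finType) (r : rel V) (rs : symmetric r) x y :
  x != y -> Iw r [set x; y] = (r x y)%:R.
Proof.
move=> xy; rewrite /Iw.
have -> // : [exists x0, exists y0, ([set x; y] == [set x0; y0]) && r x0 y0] = r x y.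
apply/existsP/idP => [[x' /existsP [y' /andP [/eqP E r']]]|rxy]; last first.
  by exists x; apply/existsP; exists y; rewrite eqxx.
have hx : x' \in [set x; y] by rewrite E set21.
have hy : y' \in [set x; y] by rewrite E set22.
case/set2P: hx E r' => ->; case/set2P: hy => -> E r' //.
- have : y \in [set x; y] by rewrite set22.
  by rewrite E in_set2 orbb => /eqP yx; move: xy; rewrite yx eqxx.
- by rewrite rs.
- have : x \in [set x; y] by rewrite set21.
  by rewrite E in_set2 orbb => /eqP yx; move: xy; rewrite yx eqxx.
Qed.

Lemma star_sym n : symmetric (@star_rel n).
Proof. by move=> i j; rewrite /star_rel eq_sym orbC. Qed.

Lemma z_eq n (z x : 'I_n) : val z = 0%N -> (z == x) = (val x == 0%N).
Proof. by move=> hz; rewrite -val_eqE hz eq_sym. Qed.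

Lemma iw_star n (z : 'I_n) (hz : val z = 0%N) x y : x != y ->
  Iw (@star_rel n) [set x; y] = if z \in [set x; y] then 1 else 0.
Proof.
move=> xy; rewrite iw_set2 //; last exact: star_sym.
by rewrite /star_rel xy in_set2 !z_eq //; case: (_ || _).
Qed.

Lemma iota_3 n : (3 <= n)%N -> iota 0 n = [:: 0, 1, 2 & iota 3 (n - 3)]%N.
Proof. by case: n => [|[|[|m]]] //= _; rewrite subSS subSS subSS subn0. Qed.

Lemma iota_2 n : (2 <= n)%N -> iota 0 n = [:: 0, 1 & iota 2 (n - 2)]%N.
Proof. by case: n => [|[|m]] //= _; rewrite subSS subSS subn0. Qed.

Lemma gdist_star n (z : 'I_n) (hz : val z = 0%N) (hn : (2 <= n)%N) p q : p != q ->
  gdist (@star_rel n) p q = if (val p == 0%N) || (val q == 0%N) then 1%N else 2%N.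
Proof.
move=> pq; rewrite /gdist.
have w1 : walk (@star_rel n) 1 p q = (val p == 0%N) || (val q == 0%N).
  apply/existsP/idP => [[w /andP [spw /eqP wq]]|h].
    by move: spw; rewrite wq /star_rel => /andP [].
  by exists q; rewrite /= eqxx andbT /star_rel pq.
case h: (_ || _).
  by rewrite card_ord iota_2 //= ifN // -/(walk _ 1 p q) w1 h.
have h3 : (3 <= n)%N.
  move/negbT: h; move: pq (ltn_ord p) (ltn_ord q); rewrite -val_eqE.
  move=> /eqP h1 l1 l2 /norP [/eqP h2 /eqP h3]; simpl in *; lia.
rewrite card_ord iota_3 //= ifN // -/(walk _ 1 p q) w1 h /= -/(walk _ 2 p q).
suff -> : walk (@star_rel n) 2 p q by [].
have h' := negbT h.
apply/existsP; exists z; apply/andP; split.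
  by rewrite /star_rel hz eqxx orbT andbT; apply: contraNneq h' => ->; rewrite hz.
apply/existsP; exists q; rewrite /= eqxx andbT /star_rel hz eqxx /= andbT.
by apply: contraNneq h' => <-; rewrite hz eqxx orbT.
Qed.

Lemma rho_star n (z : 'I_n) (hz : val z = 0%N) (hn : (2 <= n)%N) x y : x != y ->
  rhow (@star_rel n) [set x; y] = if z \in [set x; y] then 1 else 2.
Proof.
move=> xy; rewrite /rhow.
case: pickP => [p Hp|H0]; last by have := H0 x; rewrite set21.
case: pickP => [q Hq|H0]; last first.
  case/set2P: Hp H0 => -> H0.
    by have := H0 y; rewrite !inE eqxx orbT eq_sym xy.
  by have := H0 x; rewrite !inE eqxx xy.
move: Hq; rewrite !inE => /andP [qp Hq].
have pq : p != q by rewrite eq_sym.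
rewrite (gdist_star hz hn pq) !z_eq //.
case/set2P: Hp qp Hq pq => -> qp /orP [] /eqP qE; rewrite qE ?eqxx // in qp *.
  by case: (_ || _).
by rewrite orbC; case: (_ || _).
Qed.

Lemma wsum_reindex (V W : finType) (H : wgraph V) (G : wgraph W) (f : V -> W)
  (z : V) (a b : int) :
  (forall x y, x != y -> H [set x; y] = if z \in [set x; y] then a else b) ->
  bijective f ->
  wsum (wprod H G f) =
  \sum_(B : {set W} | #|B| == 2%N) (if f z \in B then a else b) * G B.
Proof.
move=> HH [g fK gK]; rewrite /wsum /wprod.
rewrite (reindex (fun B : {set W} => g @: B)); last first.
  exists (fun A : {set V} => f @: A) => B _.
    by rewrite -imset_comp (@eq_imset _ _ (f \o g) id _ gK) imset_id.
  by rewrite -imset_comp (@eq_imset _ _ (g \o f) id _ fK) imset_id.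
have ginj : injective g := can_inj gK.
apply: eq_big => [B|B]; first by rewrite card_imset.
move=> /eqP; rewrite card_imset // => /eqP /cards2P [x [y [xy ->]]].
rewrite -imset_comp (@eq_imset _ _ (f \o g) id _ gK) imset_id.
rewrite !imsetU1 !imset_set1 HH; last by rewrite (inj_eq ginj).
congr (_ * _); rewrite !in_set2.
have E u : (z == g u) = (f z == u) by apply/eqP/eqP => [->|<-]; rewrite ?gK ?fK.
by rewrite !E.
Qed.

Definition Dg (T : finType) (e : rel T) (v : T) : int :=
  \sum_(B : {set T} | (#|B| == 2%N) && (v \in B)) Iw e B.
Definition Mg (T : finType) (e : rel T) : int :=
  \sum_(B : {set T} | #|B| == 2%N) Iw e B.

Lemma sum_split (T : finType) (e : rel T) (v : T) (a b : int) :
  \sum_(B : {set T} | #|B| == 2%N) (if v \in B then a else b) * Iw e B =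
  a * Dg e v + b * (Mg e - Dg e v).
Proof.
have EM : Mg e = Dg e v + \sum_(B : {set T} | (#|B| == 2%N) && ~~ (v \in B)) Iw e B.
  by rewrite /Mg (bigID (fun B : {set T} => v \in B)).
rewrite EM [Dg e v + _]addrC addrK /Dg (bigID (fun B : {set T} => v \in B)) /=.
rewrite !mulr_sumr; congr (_ + _); apply: eq_bigr => B /andP [_ h].
  by rewrite h.
by rewrite (negbTE h).
Qed.

Lemma Dg_deg (T : finType) (e : rel T) (e_sym : symmetric e)
  (e_irr : irreflexive e) v : Dg e v = #|[set y | e v y]|%:R.
Proof.
rewrite /Dg (partition_big (fun B : {set T} => odflt v [pick y in B :\ v])
   (fun y => y != v)) /=; last first.
  move=> B /andP [/cards2P [x [y [xy ->]]] vB].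
  case: pickP => [q|H0] /=; first by rewrite !inE => /andP [].
  case/set2P: vB H0 xy => <- H0 xy.
    by have := H0 y; rewrite !inE eqxx orbT andbT eq_sym xy.
  by have := H0 x; rewrite !inE eqxx /= andbT xy.
rewrite (eq_bigr (fun y => (e v y)%:R)); last first.
  move=> y yv; rewrite (big_pred1 [set v; y]); first by rewrite iw_set2 // eq_sym.
  move=> B /=; apply/idP/eqP => [/andP [/andP [c2 vB] pE]|->].
    apply/eqP; rewrite eq_sym eqEcard cards2 (eq_sym v y) yv (eqP c2) leqnn andbT.
    apply/subsetP => w /set2P [] ->; first by [].
    move: pE; case: pickP => [q|] /=; first by rewrite inE => /andP [_ qB] /eqP <-.
    by move=> _ /eqP vy; move: yv; rewrite vy eqxx.
  rewrite cards2 (eq_sym v y) yv set21 /=.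
  case: pickP => [q|H0] /=.
    by rewrite !inE => /andP [qv]; rewrite (negbTE qv) /=.
  by have := H0 y; rewrite !inE eqxx yv orbT.
rewrite -natr_sum; congr (_ %:R).
rewrite -sum1_card big_mkcond [RHS]big_mkcond /=; apply: eq_bigr => y _.
rewrite inE; case: (boolP (e v y)) => // evy.
by rewrite ifT //; apply: contraTneq evy => ->; rewrite e_irr.
by case: (_ != _).
Qed.

Lemma card_one_iff (T : finType) (e : rel T) (e_sym : symmetric e)
  (e_irr : irreflexive e) (z : 'I_#|T|) (F : ('I_#|T| -> T) -> int) (a b : int) :
  a != b ->
  (forall f, bijective f -> F f = a * Dg e (f z) + b * (Mg e - Dg e (f z))) ->
  (regular e <-> card_one (fun w => exists f, bijective f /\ F f = w)).
Proof.
move=> ab HF.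
pose phi (d : int) := a * d + b * (Mg e - d).
have phi_inj d1 d2 : phi d1 = phi d2 -> d1 = d2.
  move=> E; have : (a - b) * (d1 - d2) = phi d1 - phi d2 by rewrite /phi; ring.
  rewrite E subrr.
  by move/eqP; rewrite mulf_eq0 subr_eq0 (negbTE ab) /= subr_eq0 => /eqP.
have ebij : bijective (@enum_val T _ : 'I_#|T| -> T).
  by exists enum_rank; [exact: enum_valK | exact: enum_rankK].
split.
  case=> k Hk; exists (phi k%:R) => w; split.
    by case=> f [fb <-]; rewrite HF // Dg_deg // Hk.
  move=> ->; exists enum_val; split => //.
  by rewrite HF // Dg_deg // Hk.
case=> c Hc.
have key x : phi (Dg e x) = c.
  pose f := fun i => @enum_val T _ (tperm z (enum_rank x) i).
  have fb : bijective f.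
    exists (fun t => tperm z (enum_rank x) (enum_rank t)) => i.
      by rewrite /f enum_valK tpermK.
    by rewrite /f tpermK enum_rankK.
  have := (Hc (F f)).1 (ex_intro _ f (conj fb erefl)).
  by rewrite HF // /f tpermL enum_rankK.
exists #|[set y | e (enum_val z) y]| => x.
apply/eqP; rewrite -(eqr_nat int) -!Dg_deg //; apply/eqP/phi_inj.
by rewrite !key.
Qed.

Theorem mainTheorem17 (T : finType) (e : rel T)
  (e_sym : symmetric e) (e_irr : irreflexive e) (hn : (2 <= #|T|)%N) :
  (regular e <-> card_one (sprod_set (Iw (@star_rel #|T|)) (Iw e))) /\
  (regular e <-> card_one (sprod_set (rhow (@star_rel #|T|)) (Iw e))).
Proof.
have lt0 : (0 < #|T|)%N by apply: leq_trans hn.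
pose z : 'I_#|T| := Ordinal lt0.
have hz : val z = 0%N by [].
split.
  apply: (@card_one_iff T e e_sym e_irr z _ 1 0) => // f fb.
  rewrite (@wsum_reindex _ _ _ _ f z 1 0) ?sum_split //.
  by move=> x y xy; rewrite (iw_star hz).
apply: (@card_one_iff T e e_sym e_irr z _ 1 2) => // f fb.
rewrite (@wsum_reindex _ _ _ _ f z 1 2) ?sum_split //.
by move=> x y xy; rewrite (rho_star hz hn).
Qed.
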